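(* Let $\rho_1, \rho_2$ be $N \times N$ density matrices (positive semidefinite complex matrices with unit trace), let $P_+$ be the orthogonal projector onto the span of the eigenvectors of $\rho_1-\rho_2$ with positive eigenvalues, and $P_-$ the orthogonal projector onto the span of the eigenvectors of $\rho_1-\rho_2$ with negative eigenvalues. Let $I$ denote the $N\times N$ identity matrix. Then $$\mathrm{tr}\,P_+(I-\rho_1)\rho_1 \ge \mathrm{tr}\,P_+(I-\rho_1)\rho_2,$$ $$\mathrm{tr}\,P_-\rho_1(I-\rho_1) \ge \mathrm{tr}\,P_-\rho_1(I-\rho_2),$$ $$\mathrm{tr}\,P_+(I-\rho_2)\rho_2 \ge \mathrm{tr}\,P_+(I-\rho_1)\rho_2,$$ $$\mathrm{tr}\,P_-\rho_2(I-\rho_2) \ge \mathrm{tr}\,P_-\rho_1(I-\rho_2).$$ *)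

(* Defs.v *)
From HB Require Import structures.
From mathcomp Require Import all_boot all_order all_algebra.
Set Implicit Arguments. Unset Strict Implicit. Unset Printing Implicit Defensive.
Import Order.TTheory GRing.Theory Num.Theory.
Local Open Scope ring_scope.
Local Open Scope sesquilinear_scope.

(* Complex scalars: an arbitrary numClosedFieldType C (e.g. complex numbers).
   Vectors are column vectors 'cV[C]_N; A ^t* is the conjugate transpose.
   On C, [0 <= z] means z is real and nonnegative. *)

Definition hermitianmx (C : numClosedFieldType) (N : nat) (A : 'M[C]_N) : Prop :=
  A ^t* = A.

Definition psdmx (C : numClosedFieldType) (N : nat) (A : 'M[C]_N) : Prop :=
  hermitianmx A /\ forall v : 'cV[C]_N, 0 <= ((v ^t*) *m A *m v) 0 0.

Definition density_matrix (C : numClosedFieldType) (N : nat) (rho : 'M[C]_N) : Prop :=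
  psdmx rho /\ \tr rho = 1.

(* v lies in the span of the eigenvectors of D whose eigenvalues satisfy [sel]
   (scalar multiples of eigenvectors being eigenvectors, the span is the set of
   finite sums of such eigenvectors) *)
Definition in_eigspan (C : numClosedFieldType) (N : nat) (sel : C -> bool)
    (D : 'M[C]_N) (v : 'cV[C]_N) : Prop :=
  exists (k : nat) (vs : 'I_k -> 'cV[C]_N) (ls : 'I_k -> C),
    (forall i, sel (ls i) /\ D *m vs i = ls i *: vs i) /\ v = \sum_(i < k) vs i.

(* P is the orthogonal projector onto the subspace S:
   P is idempotent, self-adjoint, and its range (= its fixed vectors) is S *)
Definition orth_projector_onto (C : numClosedFieldType) (N : nat)
    (P : 'M[C]_N) (S : 'cV[C]_N -> Prop) : Prop :=
  P *m P = P /\ P ^t* = P /\ (forall v : 'cV[C]_N, P *m v = v <-> S v).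

(* Main.v *)
Require Import Defs.
From HB Require Import structures.
From mathcomp Require Import all_boot all_order all_algebra.
Import Order.TTheory GRing.Theory Num.Theory.
Local Open Scope ring_scope.
Local Open Scope sesquilinear_scope.

Set Implicit Arguments. Unset Strict Implicit.
Section S.
Variable C : numClosedFieldType.

Lemma adjM m n p (A : 'M[C]_(m,n)) (B : 'M[C]_(n,p)) : (A *m B)^t* = B^t* *m A^t*.
Proof. by rewrite trmx_mul map_mxM. Qed.

Lemma herm_sym n (A : 'M[C]_n) : A^t* = A -> A \is hermsymmx.
Proof. move=> h; apply/is_hermitianmxP; by rewrite expr0 scale1r h. Qed.

Lemma quadE n (U X : 'M[C]_n) k :
  (U *m X *m U^t*) k k = ((row k U) *m X *m (row k U)^t*) 0 0.
Proof.
rewrite !mxE; apply: eq_bigr => j _; rewrite !mxE; congr (_ * _).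
apply: eq_bigr => i _; rewrite !mxE.  done.
Qed.

Lemma spec_facts n (A : 'M[C]_n) : A^t* = A ->
  let U := spectralmx A in let d := spectral_diag A in
  [/\ U *m U^t* = 1%:M, U^t* *m U = 1%:M, A = U^t* *m diag_mx d *m U
    & U *m A *m U^t* = diag_mx d].
Proof.
move=> h U d.
have UU : U *m U^t* = 1%:M by apply/unitarymxP; exact: spectral_unitarymx.
have iU : invmx U = U^t* by apply: invmx_unitary; exact: spectral_unitarymx.
have UtU : U^t* *m U = 1%:M by rewrite -iU mulVmx // spectral_unit.
have Ae : A = U^t* *m diag_mx d *m U.
  rewrite -iU; apply/orthomx_spectralP; apply: hermitian_normalmx; exact: herm_sym.
split => //.
by rewrite {1}Ae !mulmxA UU mul1mx -mulmxA UU mulmx1.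
Qed.

Lemma psd_diag n (A : 'M[C]_n) (hA : psdmx A) k : 0 <= spectral_diag A 0 k.
Proof.
case: hA => h q; have [_ _ _ E] := spec_facts h.
have <- : (spectralmx A *m A *m (spectralmx A)^t*) k k = spectral_diag A 0 k by rewrite E mxE eqxx mulr1n.
by rewrite quadE; have := q ((row k (spectralmx A))^t*); rewrite trmxCK.
Qed.

Lemma tr_psd n (A B : 'M[C]_n) : psdmx A -> psdmx B -> 0 <= \tr (A *m B).
Proof.
move=> hA hB; have [_ _ Be _] := spec_facts hB.1.
set U := spectralmx B; set d := spectral_diag B.
have -> : \tr (A *m B) = \tr (U *m A *m U^t* *m diag_mx d).
  by rewrite {1}Be !mulmxA mxtrace_mulC !mulmxA.
rewrite mul_mx_diag /mxtrace.
apply: sumr_ge0 => k _; rewrite mxE; apply: mulr_ge0; last exact: psd_diag.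
by rewrite quadE; have := hA.2 ((row k (spectralmx B))^t*); rewrite trmxCK.
Qed.

Lemma adjB n (A B : 'M[C]_n) : (A - B)^t* = A^t* - B^t*.
Proof. by rewrite linearB map_mxB. Qed.

Lemma adj1 n : (1%:M : 'M[C]_n)^t* = 1%:M.
Proof. by rewrite trmx1 map_mx1. Qed.

Lemma dens_le1 n (rho : 'M[C]_n) : density_matrix rho -> psdmx (1%:M - rho).
Proof.
move=> [[h q] t]; split; first by rewrite /Defs.hermitianmx adjB adj1 h.
move=> v.
have [UU UtU Ae _] := spec_facts h.
set U := spectralmx rho in UU UtU Ae *; set d := spectral_diag rho in Ae *.
have dge0 : forall k, 0 <= d 0 k by move=> k; exact: psd_diag.
have dle1 : forall k, d 0 k <= 1.
  move=> k; rewrite -t Ae mxtrace_mulC mulmxA UU mul1mx mxtrace_diag.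
  rewrite (bigD1 k) //= lerDl; exact: sumr_ge0.
set w := U *m v.
have -> : v^t* *m (1%:M - rho) *m v = w^t* *m w - w^t* *m diag_mx d *m w.
  rewrite mulmxBr mulmxBl mulmx1 /w adjM Ae !mulmxA.
  by congr (_ - _); rewrite -(mulmxA _ (U^t*)) UtU mulmx1.
clearbody w; rewrite mul_mx_diag !mxE -sumrB; apply: sumr_ge0 => k _; rewrite !mxE.
have -> : (w k 0)^* * w k 0 - (w k 0)^* * d 0 k * w k 0 = (1 - d 0 k) * ((w k 0)^* * w k 0).
  by rewrite mulrBl mul1r mulrCA mulrA.
apply: mulr_ge0; first by rewrite subr_ge0.
rewrite mulrC; exact: mul_conjC_ge0.
Qed.

Lemma adj_sum n k (x : 'I_k -> 'cV[C]_n) : (\sum_i x i)^t* = \sum_i (x i)^t*.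
Proof. by rewrite raddf_sum raddf_sum. Qed.

Lemma bil n k (x y : 'I_k -> 'cV[C]_n) :
  ((\sum_i x i)^t* *m \sum_j y j) 0 0 = \sum_i \sum_j ((x i)^t* *m y j) 0 0.
Proof.
rewrite adj_sum mulmx_suml summxE; apply: eq_bigr => i _.
by rewrite mulmx_sumr summxE.
Qed.

Lemma adjZ m n a (A : 'M[C]_(m,n)) : (a *: A)^t* = a^* *: A^t*.
Proof. by rewrite linearZ /= map_mxZ. Qed.

Lemma quad_ge0 n (x : 'cV[C]_n) : 0 <= (x^t* *m x) 0 0.
Proof.
rewrite mxE; apply: sumr_ge0 => k _; rewrite !mxE mulrC; exact: mul_conjC_ge0.
Qed.

Lemma posspan_quad n (D : 'M[C]_n) k (vs : 'I_k -> 'cV[C]_n) (ls : 'I_k -> C) :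
  D^t* = D -> (forall i, 0 < ls i /\ D *m vs i = ls i *: vs i) ->
  0 <= ((\sum_i vs i)^t* *m D *m \sum_i vs i) 0 0.
Proof.
move=> hD H.
pose a i j := ((vs i)^t* *m vs j) 0 0.
pose s i := sqrtC (ls i).
have sr : forall i, (s i)^* = s i.
  by move=> i; apply: geC0_conj; rewrite sqrtC_ge0; apply: ltW; case: (H i).
have lr : forall i, (ls i)^* = ls i.
  by move=> i; apply: geC0_conj; apply: ltW; case: (H i).
have eig : forall i j, ls j * a i j = ls i * a i j.
  move=> i j; rewrite /a.
  have e1 : (vs i)^t* *m (D *m vs j) = ls j *: ((vs i)^t* *m vs j).
    by rewrite (H j).2 -scalemxAr.
  have e2 : (vs i)^t* *m (D *m vs j) = ls i *: ((vs i)^t* *m vs j).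
    rewrite mulmxA -{1}hD -adjM (H i).2 adjZ lr -scalemxAl //.
  have := congr1 (fun M : 'M[C]_1 => M 0 0) (etrans (esym e1) e2).
  by rewrite /= [in X in X = _ -> _]mxE [in X in _ = X -> _]mxE.
have key : forall i j, ls j * a i j = (s i)^* * s j * a i j.
  move=> i j; rewrite sr; have [e|ne] := eqVneq (ls i) (ls j).
    by rewrite /s e -expr2 sqrtCK.
  have : (ls j - ls i) * a i j = 0 by rewrite mulrBl eig subrr.
  move/eqP; rewrite mulf_eq0 subr_eq0 eq_sym (negbTE ne) /= => /eqP ->.
  by rewrite !mulr0.
have E1 : ((\sum_i vs i)^t* *m D *m \sum_i vs i) 0 0 = \sum_i \sum_j ls j * a i j.
  rewrite -mulmxA mulmx_sumr.
  rewrite (eq_bigr _ (fun i _ => (H i).2)).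
  rewrite bil; apply: eq_bigr => i _; apply: eq_bigr => j _.
  by rewrite -scalemxAr mxE.
have E2 : ((\sum_i s i *: vs i)^t* *m \sum_j s j *: vs j) 0 0
          = \sum_i \sum_j (s i)^* * s j * a i j.
  rewrite bil; apply: eq_bigr => i _; apply: eq_bigr => j _.
  by rewrite adjZ -scalemxAl -scalemxAr scalerA mxE.
rewrite E1; under eq_bigr do under eq_bigr do rewrite key.
rewrite -E2; exact: quad_ge0.
Qed.

Lemma mx_eq_vec n (X Y : 'M[C]_n) : (forall v : 'cV_n, X *m v = Y *m v) -> X = Y.
Proof.
move=> H; apply/matrixP => i j.
have := congr1 (fun M : 'cV[C]_n => M i 0) (H (delta_mx j 0)).
by rewrite /= -!colE !mxE.
Qed.

Lemma proj_pos n (D P : 'M[C]_n) : D^t* = D ->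
  orth_projector_onto P (in_eigspan (fun l => 0 < l) D) ->
  P *m D = D *m P /\ psdmx (D *m P).
Proof.
move=> hD [PP [hP HS]].
have Sinv : forall v, in_eigspan (fun l => 0 < l) D v ->
                      in_eigspan (fun l => 0 < l) D (D *m v).
  move=> v [k [vs [ls [H ->]]]].
  exists k, (fun i => ls i *: vs i), ls; split.
    move=> i; split; first by case: (H i).
    by rewrite -scalemxAr (H i).2.
  by rewrite mulmx_sumr; apply: eq_bigr => i _; rewrite (H i).2.
have PDP : P *m D *m P = D *m P.
  apply: mx_eq_vec => v; rewrite -!mulmxA; apply/HS; apply: Sinv; apply/HS.
  by rewrite mulmxA PP.
have PD : P *m D = D *m P.
  have : (P *m D *m P)^t* = (D *m P)^t* by rewrite PDP.
  by rewrite !adjM hP hD mulmxA PDP => ->.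
split => //; split; first by rewrite /Defs.hermitianmx adjM hP hD PD.
move=> v; rewrite -PDP.
have -> : v^t* *m (P *m D *m P) *m v = (P *m v)^t* *m D *m (P *m v).
  by rewrite adjM hP !mulmxA.
have : in_eigspan (fun l => 0 < l) D (P *m v) by apply/HS; rewrite mulmxA PP.
move=> [k [vs [ls [H ->]]]]; exact: posspan_quad.
Qed.

Lemma neg_pos n (D P : 'M[C]_n) :
  orth_projector_onto P (in_eigspan (fun l => l < 0) D) ->
  orth_projector_onto P (in_eigspan (fun l => 0 < l) (- D)).
Proof.
move=> [PP [hP HS]]; split => //; split => // v; split.
  move=> /HS [k [vs [ls [H ->]]]]; exists k, vs, (fun i => - ls i); split => //.
  move=> i; split; first by rewrite oppr_gt0; case: (H i).
  by rewrite mulNmx (H i).2 scaleNr.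
move=> [k [vs [ls [H ->]]]]; apply/HS; exists k, vs, (fun i => - ls i); split => //.
move=> i; split; first by rewrite oppr_lt0; case: (H i).
by rewrite scaleNr -(H i).2 mulNmx opprK.
Qed.
End S.

Lemma subBB (V : zmodType) (a b c : V) : (a - b) - (a - c) = c - b.
Proof. by rewrite opprB addrC addrA subrK. Qed.

Theorem lemma1 (C : numClosedFieldType) (N : nat) (rho1 rho2 Pp Pm : 'M[C]_N) :
  density_matrix rho1 -> density_matrix rho2 ->
  orth_projector_onto Pp (in_eigspan (fun l => 0 < l) (rho1 - rho2)) ->
  orth_projector_onto Pm (in_eigspan (fun l => l < 0) (rho1 - rho2)) ->
  [/\ \tr (Pp *m (1%:M - rho1) *m rho1) >= \tr (Pp *m (1%:M - rho1) *m rho2),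
      \tr (Pm *m rho1 *m (1%:M - rho1)) >= \tr (Pm *m rho1 *m (1%:M - rho2)),
      \tr (Pp *m (1%:M - rho2) *m rho2) >= \tr (Pp *m (1%:M - rho1) *m rho2)
    & \tr (Pm *m rho2 *m (1%:M - rho2)) >= \tr (Pm *m rho1 *m (1%:M - rho2))].
Proof.
move=> h1 h2 hp hm.
set D := rho1 - rho2.
have hD : D^t* = D by rewrite /D adjB h1.1.1 h2.1.1.
have hD' : (- D)^t* = - D by rewrite !raddfN /= hD.
have [PDp psdp] := proj_pos hD hp.
have [PDm psdm] := proj_pos hD' (neg_pos hm).
have I1 := dens_le1 h1; have I2 := dens_le1 h2.
split; rewrite -subr_ge0.
- have -> : \tr (Pp *m (1%:M - rho1) *m rho1) - \tr (Pp *m (1%:M - rho1) *m rho2)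
      = \tr ((D *m Pp) *m (1%:M - rho1)).
    by rewrite -raddfB /= -mulmxBr mxtrace_mulC mulmxA.
  exact: tr_psd.
- have -> : \tr (Pm *m rho1 *m (1%:M - rho1)) - \tr (Pm *m rho1 *m (1%:M - rho2))
      = \tr ((- D *m Pm) *m rho1).
    rewrite -raddfB /= -mulmxBr mxtrace_mulC mulmxA.
    by rewrite subBB /D opprB.
  exact: tr_psd psdm h1.1.
- have -> : \tr (Pp *m (1%:M - rho2) *m rho2) - \tr (Pp *m (1%:M - rho1) *m rho2)
      = \tr ((D *m Pp) *m rho2).
    rewrite -raddfB /= -mulmxBl -mulmxBr mxtrace_mulC -PDp.
    by rewrite subBB mxtrace_mulC.
  exact: tr_psd psdp h2.1.
- have -> : \tr (Pm *m rho2 *m (1%:M - rho2)) - \tr (Pm *m rho1 *m (1%:M - rho2))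
      = \tr ((- D *m Pm) *m (1%:M - rho2)).
    by rewrite -raddfB /= -mulmxBl -mulmxBr -PDm /D opprB.
  exact: tr_psd.
Qed.
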